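(* Let $X$ be a set with $|X|\ge3$. Then every grading of the symmetric inverse monoid $\mathcal I(X)$ by any group is trivial.
   Context: $\mathcal I(X)$ consists of all bijections $\phi:A\to B$ with $A,B\subseteq X$, composed as partial maps (the composite $\phi\psi$ is restricted to $\psi^{-1}(\mathrm{Im}\,\psi\cap\mathrm{Dom}\,\phi)$), with the empty map as zero. A $\Gamma$-grading of a semigroup $S$ with zero is a map $\deg:S\setminus\{0\}\to\Gamma$ with $\deg(st)=\deg(s)\deg(t)$ whenever $st\neq0$; it is trivial if every nonzero element has degree equal to the identity $\varepsilon$ of $\Gamma$. *)

(* Defs.v *)
Set Implicit Arguments.

(** Elements of the symmetric inverse monoid I(X): partial injections
    phi : A -> B (A, B subsets of X), encoded as maps X -> option X
    (None = undefined) that are injective on their domain.  The image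
    B is the set of values taken. *)
Record pinj (X : Type) := PInj {
  pmap :> X -> option X;
  pmap_inj : forall x y z, pmap x = Some z -> pmap y = Some z -> x = y
}.

Definition pcomp_fun (X : Type) (phi psi : pinj X) : X -> option X :=
  fun x => match psi x with Some y => phi y | None => None end.

Lemma pcomp_inj (X : Type) (phi psi : pinj X) :
  forall x y z, pcomp_fun phi psi x = Some z -> pcomp_fun phi psi y = Some z -> x = y.
Proof.
  unfold pcomp_fun; intros x y z Hx Hy.
  destruct (psi x) as [a|] eqn:Ea; [|discriminate].
  destruct (psi y) as [b|] eqn:Eb; [|discriminate].
  assert (a = b) by (exact (@pmap_inj _ phi a b z Hx Hy)). subst b.
  exact (@pmap_inj _ psi x y a Ea Eb).
Qed.

Definition pcomp (X : Type) (phi psi : pinj X) : pinj X :=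
  PInj (pcomp_fun phi psi) (pcomp_inj phi psi).

(** The zero of I(X) is the empty map; s is nonzero iff its domain is nonempty. *)
Definition pnonzero (X : Type) (s : pinj X) : Prop := exists x, s x <> None.

Definition is_group (G : Type) (mul : G -> G -> G) (one : G) (inv : G -> G) : Prop :=
  (forall a b c, mul a (mul b c) = mul (mul a b) c) /\
  (forall a, mul one a = a) /\ (forall a, mul a one = a) /\
  (forall a, mul (inv a) a = one) /\ (forall a, mul a (inv a) = one).

(** A G-grading of I(X): deg defined on nonzero elements (its value on the
    zero element is irrelevant), multiplicative whenever the product is nonzero. *)
Definition is_grading (X G : Type) (mul : G -> G -> G) (deg : pinj X -> G) : Prop :=
  forall s t : pinj X, pnonzero s -> pnonzero t -> pnonzero (pcomp s t) ->
    deg (pcomp s t) = mul (deg s) (deg t).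

(* Main.v *)
Require Import Defs.
From Stdlib Require Import ClassicalEpsilon FunctionalExtensionality ProofIrrelevance Classical.

Section S.
Variable X : Type.

Definition eqd (x y : X) : {x = y} + {x <> y} := excluded_middle_informative (x = y).

Lemma pinj_ext (s t : pinj X) : (forall x, s x = t x) -> s = t.
Proof.
  destruct s as [f Hf], t as [g Hg]; simpl; intro H.
  assert (f = g) by (apply functional_extensionality; auto). subst g.
  f_equal; apply proof_irrelevance.
Qed.

Definition f1_fun (a b : X) (x : X) : option X := if eqd x a then Some b else None.
Lemma f1_inj a b : forall x y z, f1_fun a b x = Some z -> f1_fun a b y = Some z -> x = y.
Proof. unfold f1_fun; intros x y z; destruct (eqd x a); destruct (eqd y a); intros H1 H2;
  try discriminate; congruence. Qed.
Definition f1 a b : pinj X := PInj (f1_fun a b) (f1_inj a b).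

Definition sw_fun (a b : X) (x : X) : option X :=
  if eqd x a then Some b else if eqd x b then Some a else None.
Lemma sw_inj a b : forall x y z, sw_fun a b x = Some z -> sw_fun a b y = Some z -> x = y.
Proof. unfold sw_fun; intros x y z; destruct (eqd x a); destruct (eqd y a);
  destruct (eqd x b); destruct (eqd y b); intros H1 H2;
  try discriminate; inversion H1; inversion H2; subst; congruence. Qed.
Definition sw a b : pinj X := PInj (sw_fun a b) (sw_inj a b).

Definition cy_fun (a b c : X) (x : X) : option X :=
  if eqd x a then Some b else if eqd x b then Some c else if eqd x c then Some a else None.
Lemma cy_inj a b c (Hab : a <> b) (Hac : a <> c) (Hbc : b <> c) :
  forall x y z, cy_fun a b c x = Some z -> cy_fun a b c y = Some z -> x = y.
Proof. unfold cy_fun; intros x y z; destruct (eqd x a); destruct (eqd y a);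
  destruct (eqd x b); destruct (eqd y b); destruct (eqd x c); destruct (eqd y c); intros H1 H2;
  try discriminate; inversion H1; inversion H2; subst; congruence. Qed.
Definition cy (a b c : X) (Hab : a <> b) (Hac : a <> c) (Hbc : b <> c) : pinj X := PInj (cy_fun a b c) (@cy_inj a b c Hab Hac Hbc).

End S.
Arguments eqd {X}. Arguments f1 {X}. Arguments f1_fun {X}. Arguments sw {X}. Arguments sw_fun {X}. Arguments cy {X}. Arguments cy_fun {X}. Arguments pinj_ext {X}.

Lemma f1E X (a b x : X) : f1 a b x = f1_fun a b x. Proof. reflexivity. Qed.
Lemma swE X (a b x : X) : sw a b x = sw_fun a b x. Proof. reflexivity. Qed.
Lemma cyE X (a b c x : X) H1 H2 H3 : cy a b c H1 H2 H3 x = cy_fun a b c x. Proof. reflexivity. Qed.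
Lemma pcE X (s t : pinj X) x : pcomp s t x = pcomp_fun s t x. Proof. reflexivity. Qed.
Ltac dd := cbv beta iota delta [pmap f1 sw cy pcomp pcomp_fun f1_fun sw_fun cy_fun] in *; repeat (match goal with |- context [eqd ?p ?q] => destruct (eqd p q) end; subst; try congruence).

Theorem proposition5p1 (X : Type) (x1 x2 x3 : X)
  (H12 : x1 <> x2) (H13 : x1 <> x3) (H23 : x2 <> x3)
  (G : Type) (mul : G -> G -> G) (one : G) (inv : G -> G)
  (HG : is_group mul one inv)
  (deg : pinj X -> G) (Hdeg : is_grading mul deg) :
  forall s : pinj X, pnonzero s -> deg s = one.
Proof.
  destruct HG as [Hass [H1l [H1r [Hinvl Hinvr]]]].
  assert (idem : forall g, mul g g = g -> g = one).
  { intros g Hg. rewrite <- (Hinvl g).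
    transitivity (mul (inv g) (mul g g)).
    - rewrite Hass, Hinvl, H1l. reflexivity.
    - rewrite Hg. reflexivity. }
  assert (nz1 : forall a b : X, pnonzero (f1 a b)).
  { intros a b; exists a; dd. }
  assert (L1 : forall a : X, deg (f1 a a) = one).
  { intro a. apply idem. rewrite <- Hdeg; auto.
    - f_equal; apply pinj_ext; intro x; dd.
    - exists a; dd. }
  assert (L2 : forall (s : pinj X) (a b : X), s a = Some b -> deg s = deg (f1 a b)).
  { intros s a b Hs.
    assert (E : pcomp s (f1 a a) = f1 a b).
    { apply pinj_ext; intro x; dd. }
    rewrite <- E, Hdeg, L1, H1r; auto.
    - exists a; rewrite Hs; discriminate.
    - rewrite E; auto. }
  assert (L3 : forall a b : X, deg (f1 a b) = deg (f1 b a)).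
  { intros a b. destruct (eqd a b) as [->|n]; auto.
    rewrite <- (L2 (sw a b) a b), <- (L2 (sw a b) b a); auto;
    dd. }
  assert (L4 : forall a b c : X, a <> b -> a <> c -> b <> c -> deg (f1 a b) = one).
  { intros a b c Hab Hac Hbc.
    set (t := deg (@cy X a b c Hab Hac Hbc)).
    assert (Dab : deg (f1 a b) = t).
    { symmetry; apply L2; dd. }
    assert (Dbc : deg (f1 b c) = t).
    { symmetry; apply L2; dd. }
    assert (Dca : deg (f1 c a) = t).
    { symmetry; apply L2; dd. }
    assert (E : pcomp (f1 b c) (f1 a b) = f1 a c).
    { apply pinj_ext; intro x; dd. }
    assert (Hd := Hdeg (f1 b c) (f1 a b) (nz1 _ _) (nz1 _ _)).
    rewrite E, Dab, Dbc, L3, Dca in Hd. specialize (Hd (nz1 _ _)).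
    rewrite Dab; apply idem; auto. }
  intros s [x Hx].
  destruct (s x) as [y|] eqn:Ey; [|congruence].
  rewrite (L2 s x y Ey).
  destruct (eqd x y) as [->|nxy]; auto.
  assert (exists c, x <> c /\ y <> c) as [c [Hxc Hyc]].
  { destruct (classic (x1 <> x /\ x1 <> y)) as [[? ?]|h1]; [exists x1; auto|].
    destruct (classic (x2 <> x /\ x2 <> y)) as [[? ?]|h2]; [exists x2; auto|].
    exists x3. apply not_and_or in h1; apply not_and_or in h2.
    destruct h1 as [h1|h1]; apply NNPP in h1; destruct h2 as [h2|h2]; apply NNPP in h2;
    subst; split; congruence. }
  exact (L4 x y c nxy Hxc Hyc).
Qed.
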